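(* Under the standing assumptions, suppose $\varphi$ is lower semicontinuous on $X$, and let $\rho_k\to\infty$, $\sigma_k\to0$ with $\rho_k,\sigma_k>0$. Then for any sequence $\{x_k\}\subset X$ with $x_k\to\bar x$, every accumulation point of $\{y^*_{\rho_k,\sigma_k}(x_k)\}$ belongs to $\arg\max\{f(\bar x,y): y\in Y,\ c(\bar x,y)\le0\}$.
   Context: Standing assumptions: $X\subset\mathbb{R}^n$, $Y\subset\mathbb{R}^m$ nonempty, convex, compact; $f$ continuously differentiable with Lipschitz gradient on $X\times Y$, $f(x,\cdot)$ concave on $Y$; $c=(c_1,\dots,c_p)$ with continuously differentiable components having Lipschitz gradients, each $c_i(x,\cdot)$ convex on $Y$; $\Theta(x):=\{y\in Y:c(x,y)\le0\}\neq\emptyset$ for all $x\in X$. Notation: $[z]_+=\max\{z,0\}$ componentwise; $\varphi(x):=\max_{y\in\Theta(x)}f(x,y)$; $\psi_{\rho,\sigma}(x,y):=f(x,y)-\frac{\rho}{2}\|[c(x,y)]_+\|^2-\frac{\sigma}{2}\|y\|^2$; $y^*_{\rho,\sigma}(x)$ is the unique maximizer of $\psi_{\rho,\sigma}(x,\cdot)$ over $Y$. *)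

(* Defs.v *)
From HB Require Import structures.
From mathcomp Require Import all_boot all_order all_algebra.
From mathcomp Require Import all_classical all_reals all_analysis.
Set Implicit Arguments. Unset Strict Implicit. Unset Printing Implicit Defensive.
Import Order.TTheory GRing.Theory Num.Theory.
Import numFieldNormedType.Exports.
Local Open Scope classical_set_scope.
Local Open Scope ring_scope.

Definition sqnorm {R : realType} {m : nat} (y : 'rV[R]_m) : R :=
  \sum_(i < m) (y 0 i) ^+ 2.

Definition pos_part {R : realType} (z : R) : R := Num.max z 0.

(* continuously differentiable with Lipschitz gradient on a set S of a
   normed space: differentiable at each point of S, with a differential that
   is Lipschitz on S in operator norm (which gives continuity of the gradient). *)
Definition C11_on {R : realType} {V : normedModType R} (S : set V) (g : V -> R) : Prop :=
  (forall p, S p -> differentiable g p) /\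
  exists L : R, forall p q v, S p -> S q ->
    `| 'd g p v - 'd g q v | <= L * `|p - q| * `|v|.

Definition Theta {R : realType} {n m p : nat} (Y : set 'rV[R]_m)
  (c : 'I_p -> 'rV[R]_n -> 'rV[R]_m -> R) (x : 'rV[R]_n) : set 'rV[R]_m :=
  [set y | Y y /\ forall i, c i x y <= 0].

(* phi(x) = max_{y in Theta x} f(x,y), written as a supremum (it is attained
   under the standing assumptions) *)
Definition phi {R : realType} {n m p : nat} (Y : set 'rV[R]_m)
  (f : 'rV[R]_n -> 'rV[R]_m -> R)
  (c : 'I_p -> 'rV[R]_n -> 'rV[R]_m -> R) (x : 'rV[R]_n) : R :=
  sup [set f x y | y in Theta Y c x].

Definition psi {R : realType} {n m p : nat}
  (f : 'rV[R]_n -> 'rV[R]_m -> R)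
  (c : 'I_p -> 'rV[R]_n -> 'rV[R]_m -> R) (rho sigma : R)
  (x : 'rV[R]_n) (y : 'rV[R]_m) : R :=
  f x y - rho / 2 * (\sum_(i < p) (pos_part (c i x y)) ^+ 2)
        - sigma / 2 * sqnorm y.

Definition is_ystar {R : realType} {n m p : nat} (Y : set 'rV[R]_m)
  (f : 'rV[R]_n -> 'rV[R]_m -> R)
  (c : 'I_p -> 'rV[R]_n -> 'rV[R]_m -> R) (rho sigma : R)
  (x : 'rV[R]_n) (y : 'rV[R]_m) : Prop :=
  Y y /\ forall y', Y y' -> psi f c rho sigma x y' <= psi f c rho sigma x y.

Definition lsc_on {R : realType} {n : nat} (X : set 'rV[R]_n) (g : 'rV[R]_n -> R) : Prop :=
  forall x, X x -> forall e : R, 0 < e -> exists2 d : R, 0 < d &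
    forall x', X x' -> `|x' - x| < d -> g x - e < g x'.

Definition acc_point {R : realType} {m : nat} (u : nat -> 'rV[R]_m) (a : 'rV[R]_m) : Prop :=
  forall e : R, 0 < e -> forall N : nat, exists2 k : nat, (N <= k)%N & `|u k - a| < e.

Definition argmax_set {R : realType} {n m p : nat} (Y : set 'rV[R]_m)
  (f : 'rV[R]_n -> 'rV[R]_m -> R)
  (c : 'I_p -> 'rV[R]_n -> 'rV[R]_m -> R) (x : 'rV[R]_n) : set 'rV[R]_m :=
  [set y | Theta Y c x y /\ forall y', Theta Y c x y' -> f x y' <= f x y].

(* Main.v *)
Require Import Defs.
From HB Require Import structures.
From mathcomp Require Import all_boot all_order all_algebra.
From mathcomp Require Import all_classical all_reals all_analysis.
From mathcomp Require Import lra.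
Import Order.TTheory GRing.Theory Num.Theory.
Import numFieldNormedType.Exports.
Local Open Scope classical_set_scope.
Local Open Scope ring_scope.

Lemma cont2 (R : realType) n m (g : 'rV[R]_n * 'rV[R]_m -> R) a b :
  {for (a,b), continuous g} -> forall e : R, 0 < e -> exists2 d : R, 0 < d &
  forall x y, `|x - a| < d -> `|y - b| < d -> `|g (x,y) - g (a,b)| < e.
Proof.
move=> /cvgrPdist_lt H e e0.
have /nbhs_ballP [d d0 Hd] := H e e0.
exists d => // x y hx hy; rewrite distrC; apply: (Hd (x,y)).
split; rewrite /= -ball_normE /= distrC //.
Qed.

Lemma evN (P : nat -> Prop) : (\forall k \near \oo, P k) -> exists N, forall k, (N <= k)%N -> P k.
Proof. by move=> [N _ HN]; exists N => k Hk; apply: HN. Qed.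
Lemma entry_le (R : realType) m (y : 'rV[R]_m) i : `|y 0 i| <= `|y|.
Proof.
have -> : `|y| = mx_norm y by [].
rewrite mx_normrE.
exact: (le_bigmax _ _ (0, i)).
Qed.

Lemma sqnorm_bnd (R : realType) m (y : 'rV[R]_m) B : `|y| <= B -> sqnorm y <= m%:R * B ^+ 2.
Proof.
move=> hB; rewrite /sqnorm.
have -> : m%:R * B ^+ 2 = \sum_(i < m) B ^+ 2 by rewrite sumr_const card_ord mulr_natl.
apply: ler_sum => i _.
have h := le_trans (@entry_le _ _ y i) hB.
rewrite -real_normK ?num_real //; have := normr_ge0 (y 0 i); nra.
Qed.

Lemma sqnorm_ge0 (R : realType) m (y : 'rV[R]_m) : 0 <= sqnorm y.
Proof. by apply: sumr_ge0 => i _; apply: sqr_ge0. Qed.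
Lemma clos_pt (R : realType) m (A : set 'rV[R]_m) a : compact A ->
  (forall e : R, 0 < e -> exists z, A z /\ `|z - a| < e) -> A a.
Proof.
move=> /compact_closed cA H.
have : closure A a.
  move=> B /nbhs_ballP [e e0 He]; have [z [Az hz]] := H e e0.
  exists z; split => //; apply: He; rewrite /= -ball_normE /= distrC //.
by move: (cA (@norm_hausdorff _ _)) => /closure_id <-.
Qed.
Lemma bnd_normed (R : realType) (V : normedModType R) (A : set V) : compact A -> exists M : R, forall x, A x -> `|x| <= M.
Proof.
move=> /compact_bounded [M0 [_ HM]].
exists (`|M0| + 1) => x Ax. apply: (HM (`|M0|+1)) => //.
have := ler_norm M0. lra.
Qed.
Arguments cont2 {R n m g a b}.
Arguments sqnorm_bnd {R m y B}.
Arguments clos_pt {R m A a}.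
Arguments bnd_normed {R V A}.
Arguments evN {P}.

Theorem lemmaC4 (R : realType) (n m p : nat)
  (X : set 'rV[R]_n) (Y : set 'rV[R]_m)
  (f : 'rV[R]_n -> 'rV[R]_m -> R)
  (c : 'I_p -> 'rV[R]_n -> 'rV[R]_m -> R)
  (* standing assumptions *)
  (hX0 : X !=set0) (hXc : convex_set X) (hXk : compact X)
  (hY0 : Y !=set0) (hYc : convex_set Y) (hYk : compact Y)
  (hf : C11_on (X `*` Y) (fun z : 'rV[R]_n * 'rV[R]_m => f z.1 z.2))
  (hfconc : forall x, X x -> forall y1 y2 (t : R), Y y1 -> Y y2 -> 0 <= t <= 1 ->
      t * f x y1 + (1 - t) * f x y2 <= f x (t *: y1 + (1 - t) *: y2))
  (hc : forall i, C11_on (X `*` Y) (fun z : 'rV[R]_n * 'rV[R]_m => c i z.1 z.2))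
  (hcconv : forall i x, X x -> forall y1 y2 (t : R), Y y1 -> Y y2 -> 0 <= t <= 1 ->
      c i x (t *: y1 + (1 - t) *: y2) <= t * c i x y1 + (1 - t) * c i x y2)
  (hTheta : forall x, X x -> Theta Y c x !=set0)
  (* hypotheses of the lemma *)
  (hphi : lsc_on X (phi Y f c))
  (rho sigma : nat -> R)
  (hrho0 : forall k, 0 < rho k) (hsigma0 : forall k, 0 < sigma k)
  (hrho : rho @ \oo --> +oo) (hsigma : sigma @ \oo --> 0)
  (x : nat -> 'rV[R]_n) (xbar : 'rV[R]_n)
  (hxX : forall k, X (x k)) (hx : x @ \oo --> xbar)
  (ystar : nat -> 'rV[R]_m)
  (hystar : forall k, is_ystar Y f c (rho k) (sigma k) (x k) (ystar k))
  (ybar : 'rV[R]_m) (hacc : acc_point ystar ybar) :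
  argmax_set Y f c xbar ybar.
Proof.
have [hfd _] := hf.
have contf : forall a b, X a -> Y b ->
    {for (a,b), continuous (fun z : 'rV[R]_n * 'rV[R]_m => f z.1 z.2)}.
  by move=> a b Xa Yb; apply: differentiable_continuous; apply: hfd.
have contc : forall i a b, X a -> Y b ->
    {for (a,b), continuous (fun z : 'rV[R]_n * 'rV[R]_m => c i z.1 z.2)}.
  by move=> i a b Xa Yb; apply: differentiable_continuous; apply: (hc i).1.
have [M hM] : exists M : R, forall a b, X a -> Y b -> `|f a b| <= M.
  have cXY : compact ((fun z : 'rV[R]_n * 'rV[R]_m => f z.1 z.2) @` (X `*` Y)).
    apply: continuous_compact; last exact: compact_setX.
    apply: continuous_in_subspaceT => -[a b]; rewrite inE => -[Xa Yb]; exact: contf.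
  have [M HM] := bnd_normed cXY.
  by exists M => a b Xa Yb; apply: HM; exists (a,b).
have [Bn hBn] := bnd_normed hYk.
set B := m%:R * Bn ^+ 2.
have hB : forall y, Y y -> sqnorm y <= B by move=> y Yy; apply: sqnorm_bnd; apply: hBn.
have B0 : 0 <= B by rewrite /B mulr_ge0 // sqr_ge0.
move/cvgrPdist_lt: hx => hx'.
move/cvgrPdist_lt: hsigma => hsig'.
move/cvgryPge: hrho => hrho'.
have XA : X xbar.
  apply: clos_pt hXk _ => e e0.
  have [N HN] := evN (hx' e e0).
  exists (x N); split => //; rewrite distrC; exact: HN.
have YB : Y ybar.
  apply: clos_pt hYk _ => e e0.
  have [k _ hk] := hacc e e0 0%N.
  by exists (ystar k); split => //; have [] := hystar k.
have P0 : forall a y, Theta Y c a y -> \sum_(i < p) pos_part (c i a y) ^+ 2 = 0.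
  move=> a y [_ hy]; apply: big1 => i _; rewrite /pos_part max_r ?hy //.
  by rewrite expr2 mul0r.
have Pge0 : forall a y, 0 <= \sum_(i < p) pos_part (c i a y) ^+ 2.
  by move=> a y; apply: sumr_ge0 => i _; apply: sqr_ge0.
have Pge : forall a y i, pos_part (c i a y) ^+ 2 <= \sum_(j < p) pos_part (c j a y) ^+ 2.
  move=> a y i; rewrite (bigD1 i) //= lerDl; apply: sumr_ge0 => j _; exact: sqr_ge0.
have feas : forall i, c i xbar ybar <= 0.
  move=> i; rewrite leNgt; apply/negP => ha.
  set a := c i xbar ybar in ha.
  have a2 : 0 < a / 2 by lra.
  have [d d0 hd] := cont2 (contc i xbar ybar XA YB) _ a2.
  set q := (a/2)^+2.
  have q0 : 0 < q by rewrite exprn_gt0.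
  set K0 := (4 * M + 2 * B + 2) / q.
  have [N1 HN1] := evN (hx' d d0).
  have [N2 HN2] := evN (hrho' K0).
  have [N3 HN3] := evN (hsig' 1 ltr01).
  have [k hk hyk] := hacc d d0 (maxn N1 (maxn N2 N3)).
  move: hk; rewrite !geq_max => /and3P [h1 h2 h3].
  have xk := HN1 k h1.
  have rk := HN2 k h2.
  have sk := HN3 k h3.
  have [Yyk hmax] := hystar k.
  have [y' Ty'] := hTheta (x k) (hxX k).
  have := hmax y' Ty'.1.
  rewrite /psi (P0 _ _ Ty').
  have hc' := hd (x k) (ystar k) ltac:(by rewrite distrC) hyk.
  have cgt : a/2 < c i (x k) (ystar k).
    move: hc'; rewrite /= ltr_norml -/a => /andP [hh _]; lra.
  have ppq : q <= pos_part (c i (x k) (ystar k))^+2.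
    rewrite /pos_part max_l; last lra.
    rewrite /q !expr2; nra.
  have Pk := Pge (x k) (ystar k) i.
  have := hM _ _ (hxX k) Yyk; rewrite ler_norml => /andP [fk1 fk2].
  have := hM _ _ (hxX k) Ty'.1; rewrite ler_norml => /andP [fy1 fy2].
  set P := \sum_(j < p) pos_part (c j (x k) (ystar k)) ^+ 2.
  have rq : K0 * q <= rho k * P.
    apply: le_trans (ler_wpM2r (ltW q0) rk) _.
    apply: ler_wpM2l; first exact: ltW.
    exact: le_trans ppq Pk.
  have K0q : K0 * q = 4 * M + 2 * B + 2 by rewrite /K0 divfK // gt_eqF.
  have s1 : sigma k < 1.
    by move: sk; rewrite sub0r normrN gtr0_norm.
  have sS : sigma k * sqnorm y' <= B.
    apply: le_trans (hB _ Ty'.1); rewrite -[X in _ <= X]mul1r.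
    by apply: ler_wpM2r; [apply: sqnorm_ge0| apply: ltW].
  have sS2 : 0 <= sigma k * sqnorm (ystar k).
    by apply: mulr_ge0; [apply: ltW | apply: sqnorm_ge0].
  lra.
split; first by split.
move=> y' Ty'.
apply/ler_addgt0Pr => e e0.
set e4 := e / 4.
have e40 : 0 < e4 by rewrite /e4 divr_gt0.
have ub : forall a, X a -> has_ubound [set f a y | y in Theta Y c a].
  move=> a Xa; exists M => _ [y [Yy _] <-].
  exact: le_trans (ler_norm _) (hM a y Xa Yy).
have h1 : f xbar y' <= phi Y f c xbar.
  by apply: (ub_le_sup (ub _ XA)); exists y'.
have [d1 d10 hd1] := hphi xbar XA e4 e40.
have [d2 d20 hd2] := cont2 (contf xbar ybar XA YB) _ e40.
have B10 : 0 < B + 1 by lra.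
set eb := e4 / (B + 1).
have eb0 : 0 < eb by apply: divr_gt0.
have [N1 HN1] := evN (hx' d1 d10).
have [N2 HN2] := evN (hx' d2 d20).
have [N3 HN3] := evN (hsig' eb eb0).
have [k hk hyk] := hacc d2 d20 (maxn N1 (maxn N2 N3)).
move: hk; rewrite !geq_max => /and3P [k1 k2 k3].
have xk1 := HN1 k k1.
have xk2 := HN2 k k2.
have sk := HN3 k k3.
have [Yyk hmax] := hystar k.
have hne : [set f (x k) y | y in Theta Y c (x k)] !=set0.
  have [y0 Ty0] := hTheta _ (hxX k).
  by exists (f (x k) y0); exists y0.
have [_ [y'' Ty'' <-] hyy] := sup_adherent e40 (conj hne (ub _ (hxX k))).
have h3 : phi Y f c (x k) - e4 < f (x k) y'' := hyy.
have h2 : phi Y f c xbar - e4 < phi Y f c (x k).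
  by apply: hd1 => //; rewrite distrC.
have := hmax y'' Ty''.1.
rewrite /psi (P0 _ _ Ty'').
have s1 : sigma k < eb.
  by move: sk; rewrite sub0r normrN gtr0_norm.
have sB : sigma k * (B + 1) < e4 by rewrite -ltr_pdivlMr.
have sS : sigma k * sqnorm y'' <= sigma k * (B + 1).
  apply: ler_wpM2l; first exact: ltW.
  have := hB _ Ty''.1; lra.
have sS2 : 0 <= sigma k * sqnorm (ystar k).
  by apply: mulr_ge0; [apply: ltW | apply: sqnorm_ge0].
have rP : 0 <= rho k * \sum_(j < p) pos_part (c j (x k) (ystar k)) ^+ 2.
  by apply: mulr_ge0; [apply: ltW | apply: Pge0].
have hf2 := hd2 (x k) (ystar k) ltac:(by rewrite distrC) hyk.
move: hf2; rewrite /= ltr_norml => /andP [_ hf2].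
have e4e : 4 * e4 = e by rewrite /e4; lra.
lra.
Qed.
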